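(* Let $n\geq 1$, $m\geq 2$, and let $M$ be a perfect matching of $T(2n+1,2m)$. Then there is a perfect matching $M'$ of $T(2n+1,2m)$ obtained from $M$ by a finite sequence of flips such that $M'\cap E_i=\emptyset$ for some $1\leq i\leq 2m$.
   Context: $T(2n+1,2m)$ is the graph with vertices $(u_i,v_j)$, $i\in\mathbb{Z}_{2m}$, $j\in\mathbb{Z}_{2n+1}$, where $(u_i,v_j)$ is adjacent to $(u_{i+1},v_j)$ and $(u_i,v_{j+1})$, embedded in the torus with faces the $4$-cycles $(u_i,v_j)(u_{i+1},v_j)(u_{i+1},v_{j+1})(u_i,v_{j+1})$. For $1\le i\le 2m$, $E_i=\{(u_i,v_j)(u_{i+1},v_j):1\le j\le 2n+1\}$ (index $i+1$ mod $2m$). A flip of a perfect matching $M$ replaces $M$ by $M\oplus E(C)$ where $C$ is a facial $4$-cycle whose edges alternate between $M$ and not in $M$. *)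

(* Defs.v *)
From mathcomp Require Import all_boot.
Set Implicit Arguments. Unset Strict Implicit. Unset Printing Implicit Defensive.

(* The torus grid T(p, q) with p = 2n+1 (index j : 'I_p) and q = 2m (index i : 'I_q).
   Vertex (i, j) stands for (u_i, v_j). *)
Definition tvert (q p : nat) := ('I_q * 'I_p)%type.

(* An edge is labelled (i, j, b):
   b = true  : the edge (u_i,v_j)(u_{i+1},v_j)   (these form E_i)
   b = false : the edge (u_i,v_j)(u_i,v_{j+1}).
   For q >= 4 and p >= 3 these labels are in bijection with the edges. *)
Definition tedge (q p : nat) := ('I_q * 'I_p * bool)%type.

Definition tends q p (e : tedge q p) : tvert q p * tvert q p :=
  let: (i, j, b) := e in
  if b then ((i, j), (ordS i, j)) else ((i, j), (i, ordS j)).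

Definition incident q p (e : tedge q p) (x : tvert q p) : bool :=
  ((tends e).1 == x) || ((tends e).2 == x).

Definition perfect_matching q p (M : {set tedge q p}) : bool :=
  [forall x : tvert q p, #|[set e in M | incident e x]| == 1].

Definition face_edges q p (i : 'I_q) (j : 'I_p) : {set tedge q p} :=
  [set (i, j, true); (ordS i, j, false); (i, ordS j, true); (i, j, false)].

Definition alternating q p (M : {set tedge q p}) (i : 'I_q) (j : 'I_p) : bool :=
  [&& (i, j, true) \in M, (ordS i, j, false) \notin M,
      (i, ordS j, true) \in M & (i, j, false) \notin M]
  || [&& (i, j, true) \notin M, (ordS i, j, false) \in M,
      (i, ordS j, true) \notin M & (i, j, false) \in M].

Definition symdiff (T : finType) (A B : {set T}) : {set T} := (A :\: B) :|: (B :\: A).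

Definition flip q p : rel {set tedge q p} := fun M M' =>
  [exists i : 'I_q, exists j : 'I_p,
     alternating M i j && (M' == symdiff M (face_edges i j))].

Definition Eset q p (i : 'I_q) : {set tedge q p} := [set (i, j, true) | j : 'I_p].

(* Main.v *)
Require Import Defs.
From mathcomp Require Import all_boot zify.
From Stdlib Require Import Classical_Prop.
Set Implicit Arguments. Unset Strict Implicit. Unset Printing Implicit Defensive.

Lemma first_ex (P : pred nat) : (exists n, P n) -> exists n, P n /\ forall m, m < n -> ~~ P m.
Proof.
move=> h; case: (ex_minnP h) => n Pn mn; exists n; split => // k kn.
by apply/negP => Pk; have := mn _ Pk; rewrite leqNgt kn.
Qed.

Lemma ordS_neq N (i : 'I_N) : 1 < N -> ordS i != i.
Proof.
move=> hN; apply/negP => /eqP/(congr1 val) /=.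
case: (ltngtP i.+1 N) => h.
- rewrite modn_small //; lia.
- have := ltn_ord i; lia.
- rewrite h modnn => e; have := ltn_ord i; lia.
Qed.

Section Torus.
Variables q p : nat.
Hypothesis hq : 2 < q.
Hypothesis hp : 2 < p.
Hypothesis op : odd p.

Local Notation E := (tedge q p).
Local Notation cS := (@ordS q).
Local Notation cP := (@ord_pred q).
Definition R (i : 'I_q) (j : 'I_p) : E := (i, j, true).
Definition U (i : 'I_q) (j : 'I_p) : E := (i, j, false).

Definition sh (a : 'I_p) t := iter t (@ordS p) a.

Arguments sh : simpl never.

Lemma val_sh a t : val (sh a t) = (a + t) %% p.
Proof.
elim: t => [|t IH]; first by rewrite addn0 modn_small.
by rewrite /sh iterS /= -/(sh a t) IH -addn1 modnDml addn1 addnS.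
Qed.

Lemma sh0 a : sh a 0 = a. Proof. by []. Qed.
Lemma shS a t : sh a t.+1 = ordS (sh a t). Proof. by []. Qed.
Lemma sh_add a s t : sh (sh a s) t = sh a (t + s).
Proof. by rewrite /sh iterD. Qed.

Lemma sh_inj a t t' : t < p -> t' < p -> (sh a t == sh a t') = (t == t').
Proof.
move=> ht ht'; apply/eqP/eqP => [|->//].
move/(congr1 val); rewrite !val_sh => /eqP; rewrite eqn_modDl !modn_small //.
by move/eqP.
Qed.

Lemma sh_p a : sh a p = a.
Proof. by apply: val_inj; rewrite val_sh modnDr modn_small. Qed.

Lemma sh_surj a r : exists2 t, t < p & sh a t = r.
Proof.
exists ((r + (p - a)) %% p); first by rewrite ltn_mod; lia.
apply: val_inj; rewrite val_sh modnDmr.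
have -> : a + (r + (p - a)) = r + p by have := ltn_ord a; lia.
by rewrite modnDr modn_small.
Qed.


Definition pm (M : {set E}) := perfect_matching M.
Definition hz (M : {set E}) c r := (R c r \in M) || (R (cP c) r \in M).

Lemma cSneq (c : 'I_q) : cS c != c. Proof. by apply: ordS_neq; lia. Qed.
Lemma rSneq (r : 'I_p) : ordS r != r. Proof. by apply: ordS_neq; lia. Qed.
Lemma cPneq (c : 'I_q) : cP c != c.
Proof. apply/eqP => h; have := cSneq (cP c); by rewrite ord_predK h eqxx. Qed.

Lemma incP (e : E) x : incident e x -> e = (x.1, x.2, true) \/ e = (cP x.1, x.2, true)
  \/ e = (x.1, x.2, false) \/ e = (x.1, ord_pred x.2, false).
Proof.
case: e => [[i j] b]; case: x => c r /=; rewrite /incident /tends.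
case: b => /orP[] /eqP /= [] <- <-; rewrite ?ordSK; tauto.
Qed.

Lemma inc_R1 i j : incident (R i j) (i, j). Proof. by rewrite /incident /= eqxx. Qed.
Lemma inc_R2 i j : incident (R i j) (cS i, j). Proof. by rewrite /incident /= eqxx orbT. Qed.
Lemma inc_U1 i j : incident (U i j) (i, j). Proof. by rewrite /incident /= eqxx. Qed.
Lemma inc_U2 i j : incident (U i j) (i, ordS j). Proof. by rewrite /incident /= eqxx orbT. Qed.
Lemma inc_L c r : incident (R (cP c) r) (c, r). Proof. by rewrite -{2}(ord_predK c) inc_R2. Qed.

Section PM.
Variable M : {set E}.
Hypothesis pmM : pm M.

Lemma pm_uniq x e1 e2 : e1 \in M -> e2 \in M -> incident e1 x -> incident e2 x -> e1 = e2.
Proof.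
move: pmM => /forallP /(_ x) /cards1P [e0 h] h1 h2 i1 i2.
have : e1 \in [set e in M | incident e x] by rewrite inE h1.
have : e2 \in [set e in M | incident e x] by rewrite inE h2.
by rewrite h !inE => /eqP -> /eqP ->.
Qed.

Lemma pm_cov x : exists e, e \in M /\ incident e x.
Proof.
move: pmM => /forallP /(_ x) /cards1P [e0 h].
have : e0 \in [set e in M | incident e x] by rewrite h inE.
rewrite inE => /andP[]; eauto.
Qed.

Lemma ex_RU c r : R c r \in M -> U c r \notin M.
Proof. by move=> h; apply/negP => h'; have := pm_uniq h h' (inc_R1 c r) (inc_U1 c r). Qed.
Lemma ex_LU c r : R (cP c) r \in M -> U c r \notin M.
Proof. by move=> h; apply/negP => h'; have := pm_uniq h h' (inc_L c r) (inc_U1 c r). Qed.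
Lemma ex_RL c r : R c r \in M -> R (cP c) r \notin M.
Proof.
move=> h; apply/negP => h'; have := pm_uniq h h' (inc_R1 c r) (inc_L c r).
move/(congr1 (fun e : E => e.1.1)) => /= e; by move: (cPneq c); rewrite -e eqxx.
Qed.
Lemma ex_UU c r : U c r \in M -> U c (ordS r) \notin M.
Proof.
move=> h; apply/negP => h'; have := pm_uniq h h' (inc_U2 c r) (inc_U1 c (ordS r)).
move/(congr1 (fun e : E => e.1.2)) => /= e; by move: (rSneq r); rewrite -e eqxx.
Qed.
Lemma ex_UR c r : U c r \in M -> R c (ordS r) \notin M.
Proof. by move=> h; apply/negP => h'; have := pm_uniq h h' (inc_U2 c r) (inc_R1 c (ordS r)). Qed.
Lemma ex_UL c r : U c r \in M -> R (cP c) (ordS r) \notin M.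
Proof. by move=> h; apply/negP => h'; have := pm_uniq h h' (inc_U2 c r) (inc_L c (ordS r)). Qed.
Lemma hz_U1 c r : hz M c r -> U c r \notin M.
Proof. by case/orP; [apply: ex_RU | apply: ex_LU]. Qed.
Lemma hz_U2 c r : hz M c (ordS r) -> U c r \notin M.
Proof.
by case/orP => h; apply/negP => /[dup] /ex_UR/negP ? /ex_UL/negP.
Qed.
Lemma cov_vert c r : ~~ hz M c (ordS r) -> U c r \notin M -> U c (ordS r) \in M.
Proof.
move=> nh nu; case: (pm_cov (c, ordS r)) => e [eM /incP] /=.
rewrite ordSK; case=> [?|[?|[?|?]]]; subst e => //.
- by move: nh; rewrite /hz /R eM.
- by move: nh; rewrite /hz /R eM orbT.
- by move: nu; rewrite /U eM.
Qed.


Definition vbet c b s := forall t, 0 < t < s -> ~~ hz M c (sh b t).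

Lemma PL c b s : hz M c b -> vbet c b s ->
  forall t, t < s -> (U c (sh b t) \in M) = odd t.
Proof.
move=> h0 hv; elim=> [_|t IH lt]; first by rewrite sh0; apply/negbTE/hz_U1.
have {}IH := IH (ltnW lt); rewrite shS /=.
case ot: (odd t) in IH *.
- by rewrite (negbTE (ex_UU IH)).
- by apply: cov_vert; [apply: (hv t.+1); rewrite lt | rewrite IH].
Qed.

Lemma PL_end c b s : 0 < s -> hz M c b -> vbet c b s -> hz M c (sh b s) -> odd s.
Proof.
case: s => // s _ h0 hv hs.
have := PL h0 hv (ltnSn s); rewrite (negbTE (hz_U2 hs)) /=.
by move/esym => ->.
Qed.

End PM.

Lemma symdiffE (A B : {set E}) e : (e \in symdiff A B) = (e \in A) (+) (e \in B).
Proof. by rewrite /symdiff !inE; case: (e \in A); case: (e \in B). Qed.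

Lemma symE2 (M F : {set E}) e :
  ((e \notin F) && (e \in M) || (e \notin M) && (e \in F)) = (e \in M) (+) (e \in F).
Proof. by case: (e \in M); case: (e \in F). Qed.

Lemma S'_0 (M F : {set E}) x : (forall e, e \in F -> ~~ incident e x) ->
  [set e in symdiff M F | incident e x] = [set e in M | incident e x].
Proof.
move=> h; apply/setP => e; rewrite !in_set symE2.
by case: (boolP (e \in F)) => eF; [rewrite (negbTE (h _ eF)) !andbF | rewrite addbF].
Qed.

Lemma S'_2 (M F : {set E}) x u w : pm M -> u \in F -> w \in F -> incident u x -> incident w x ->
  (forall e, e \in F -> incident e x -> e = u \/ e = w) -> (u \in M) (+) (w \in M) ->
  #|[set e in symdiff M F | incident e x]| == 1.
Proof.
move=> pmM.
wlog uM : u w / u \in M.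
  move=> W uF wF iu iw h xo; case: (boolP (u \in M)) => uM; first exact: (W u w).
  apply: (W w u) => //; last by rewrite addbC.
  - by move: xo; rewrite (negbTE uM) /= => ->.
  - by move=> e eF ie; case: (h e eF ie); auto.
move=> uF wF iu iw h; rewrite uM /= => wM.
apply/cards1P; exists w; apply/setP => e; rewrite !in_set symE2.
rewrite in_set1.
apply/andP/eqP => [[]|->]; last by rewrite wF (negbTE wM) iw.
case: (boolP (e \in F)) => eF; rewrite ?addbT ?addbF => eM ie.
- by case: (h e eF ie) => // ee; move: eM; rewrite ee uM.
- by have ee := pm_uniq pmM eM uM ie iu; move: eF; rewrite ee uF.
Qed.

Lemma inc_T i0 j0 c r : incident ((i0, j0, true) : E) (c, r) =
  ((i0 == c) && (j0 == r)) || ((cS i0 == c) && (j0 == r)).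
Proof. by rewrite /incident /tends /= !xpair_eqE. Qed.
Lemma inc_F i0 j0 c r : incident ((i0, j0, false) : E) (c, r) =
  ((i0 == c) && (j0 == r)) || ((i0 == c) && (ordS j0 == r)).
Proof. by rewrite /incident /tends /= !xpair_eqE. Qed.

Lemma pm_flip M i j : pm M -> alternating M i j -> pm (symdiff M (face_edges i j)).
Proof.
move=> pmM alt; set F := face_edges i j.
have hi := cSneq i; have hj := rSneq j.
have hi' : (i == cS i) = false by rewrite eq_sym (negbTE hi).
have hj' : (j == ordS j) = false by rewrite eq_sym (negbTE hj).
have hi2 := negbTE hi; have hj2 := negbTE hj.
have [x1 x2 x3 x4] : [/\ ((i,j,true) \in M) (+) ((i,j,false) \in M),
   ((i,j,true) \in M) (+) ((cS i,j,false) \in M),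
   ((i,ordS j,true) \in M) (+) ((cS i,j,false) \in M) &
   ((i,ordS j,true) \in M) (+) ((i,j,false) \in M)].
  move: alt; rewrite /alternating.
  by case/orP => /and4P [a b c d]; [rewrite a c (negbTE b) (negbTE d) | rewrite b d (negbTE a) (negbTE c)].
apply/forallP => -[c r].
case: (boolP ((c, r) \in [set (i,j); (cS i, j); (cS i, ordS j); (i, ordS j)])).
- rewrite !inE -!orbA => /or4P [] /eqP [-> ->].
  + apply: (S'_2 (u := (i,j,true)) (w := (i,j,false))) => //;
      rewrite ?inE ?eqxx ?orbT ?inc_T ?inc_F ?eqxx //.
    move=> e; rewrite !inE -!orbA => /or4P [] /eqP -> ; rewrite ?inc_T ?inc_F ?eqxx ?hi2 ?hj2 ?hi' ?hj' //=; auto.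
  + apply: (S'_2 (u := (i,j,true)) (w := (cS i,j,false))) => //;
      rewrite ?inE ?eqxx ?orbT ?inc_T ?inc_F ?eqxx ?orbT //.
    move=> e; rewrite !inE -!orbA => /or4P [] /eqP -> ; rewrite ?inc_T ?inc_F ?eqxx ?hi2 ?hj2 ?hi' ?hj' //=; auto.
  + apply: (S'_2 (u := (i,ordS j,true)) (w := (cS i,j,false))) => //;
      rewrite ?inE ?eqxx ?orbT ?inc_T ?inc_F ?eqxx ?orbT //.
    move=> e; rewrite !inE -!orbA => /or4P [] /eqP -> ; rewrite ?inc_T ?inc_F ?eqxx ?hi2 ?hj2 ?hi' ?hj' //=; auto.
  + apply: (S'_2 (u := (i,ordS j,true)) (w := (i,j,false))) => //;
      rewrite ?inE ?eqxx ?orbT ?inc_T ?inc_F ?eqxx ?orbT //.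
    move=> e; rewrite !inE -!orbA => /or4P [] /eqP -> ; rewrite ?inc_T ?inc_F ?eqxx ?hi2 ?hj2 ?hi' ?hj' //=; auto.
- move=> nx; rewrite S'_0; first by move/forallP: pmM; apply.
  move=> e; rewrite !inE -!orbA => /or4P [] /eqP ->; apply/negP; rewrite ?inc_T ?inc_F;
  move=> h; apply: (negP nx); rewrite !inE;
  by case/orP: h => /andP [/eqP <- /eqP <-]; rewrite eqxx ?orbT.
Qed.


Implicit Types (M : {set E}) (i : 'I_q) (j : 'I_p) (e : E).

Definition W (M : {set E}) := #|[set e in M | e.2]|.

Lemma flipI M i j : alternating M i j -> flip M (symdiff M (face_edges i j)).
Proof. by move=> alt; apply/existsP; exists i; apply/existsP; exists j; rewrite alt eqxx. Qed.

Lemma inSymH (M F : {set E}) e : (e \in [set x in symdiff M F | x.2]) = ((e \in M) (+) (e \in F)) && e.2.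
Proof. by rewrite !in_set symE2. Qed.
Lemma inH M e : (e \in [set x in M | x.2]) = (e \in M) && e.2.
Proof. by rewrite !in_set. Qed.

Lemma faceE i j e : (e \in face_edges i j) =
  [|| e == (i,j,true), e == (cS i,j,false), e == (i,ordS j,true) | e == (i,j,false)].
Proof. by rewrite !inE -!orbA. Qed.

Lemma Bneq i j : ((i,j,true) : E) != (i,ordS j,true).
Proof. by rewrite !xpair_eqE eqxx /= eq_sym (negbTE (rSneq j)). Qed.

Lemma W_dec M i j : (i,j,true) \in M -> (i,ordS j,true) \in M ->
  W (symdiff M (face_edges i j)) + 2 = W M.
Proof.
move=> h1 h2; set B : {set E} := [set (i,j,true); (i,ordS j,true)].
rewrite /W; have -> : [set e in symdiff M (face_edges i j) | e.2] = [set e in M | e.2] :\: B.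
  apply/setP => e; rewrite inSymH in_setD inH.
  case: (boolP (e \in face_edges i j)) => eF; rewrite ?addbT ?addbF.
  - move: eF; rewrite faceE => /or4P [] /eqP -> /=; by rewrite ?h1 ?h2 ?inE ?eqxx ?orbT ?andbF.
  - suff -> : (e \in B) = false by [].
    apply/negP => eB; apply: (negP eF); move: eB; rewrite faceE !inE.
    by case/orP => ->; rewrite ?orbT.
rewrite cardsD (setIidPr _); last by apply/subsetP => e; rewrite !inE => /orP [] /eqP ->; rewrite ?h1 ?h2.
rewrite cards2 Bneq subnK //.
have <- : #|B| = 2 by rewrite cards2 Bneq.
by apply: subset_leq_card; apply/subsetP => e; rewrite !inE => /orP [] /eqP ->; rewrite ?h1 ?h2.
Qed.

Lemma W_inc M i j : (i,j,true) \notin M -> (i,ordS j,true) \notin M ->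
  W (symdiff M (face_edges i j)) = W M + 2.
Proof.
move=> h1 h2; set B : {set E} := [set (i,j,true); (i,ordS j,true)].
rewrite /W; have -> : [set e in symdiff M (face_edges i j) | e.2] = [set e in M | e.2] :|: B.
  apply/setP => e; rewrite inSymH in_setU inH.
  case: (boolP (e \in face_edges i j)) => eF; rewrite ?addbT ?addbF.
  - move: eF; rewrite faceE => /or4P [] /eqP -> /=;
      by rewrite ?(negbTE h1) ?(negbTE h2) ?inE ?xpair_eqE ?eqxx /= ?andbF ?orbF ?orbT.
  - suff -> : (e \in B) = false by rewrite orbF.
    apply/negP => eB; apply: (negP eF); move: eB; rewrite faceE !inE.
    by case/orP => ->; rewrite ?orbT.
rewrite cardsU.
have -> : [set e in M | e.2] :&: B = set0.
  apply/setP => e; rewrite !inE; apply/negP => /andP [/andP [eM _]] /orP [] /eqP ee;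
  by move: eM; rewrite ee ?(negbTE h1) ?(negbTE h2).
by rewrite cards0 subn0 cards2 Bneq.
Qed.


Definition red M := exists M2, connect (@flip q p) M M2 /\ pm M2 /\ W M2 < W M.

Lemma ex_UR0 M c r : pm M -> U c r \in M -> R c r \notin M.
Proof. by move=> pmM h; apply/negP => /(ex_RU pmM)/negP. Qed.

Ltac shsimp := repeat (rewrite sh_inj; [|done|done]).

Lemma slide N : forall g M i a, g <= N -> pm M -> odd g -> g < p ->
  R i (sh a 0) \in M -> R i (sh a g) \in M ->
  (forall t, t < g -> odd t -> U i (sh a t) \in M /\ U (cS i) (sh a t) \in M) -> red M.
Proof.
elim: N => [|N IH] g M i a gN pmM og gp h0 hg hU; first by move: og; have -> : g = 0 by lia.
have hi2 : (cS i == i) = false by apply/negbTE/cSneq.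
have hi' : (i == cS i) = false by rewrite eq_sym hi2.
have hUL := @ex_LU M pmM (cS i); rewrite ordSK in hUL.
have p0 : 0 < p by lia.
have p1 : 1 < p by lia.
case: (ltngtP g 1) => [g1|g1|g1].
- by move: og; have -> : g = 0 by lia.
-
  have g3 : 3 <= g by case: g og g1 {gN gp hg hU} => [|[|[|]]].
  have [u1 u1'] := hU 1 g1 isT.
  set F1 := face_edges i (sh a 1).
  have alt1 : alternating M i (sh a 1).
    apply/orP; right; rewrite /alternating u1 u1' -shS.
    by rewrite (ex_UR0 pmM u1) (ex_UR pmM u1).
  set M1 := symdiff M F1.
  have pm1 : pm M1 by apply: pm_flip.
  have W1 : W M1 = W M + 2.
    by apply: W_inc; [apply: (ex_UR0 pmM u1) | apply: (ex_UR pmM u1)].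
  have m1 e : (e \in M1) = (e \in M) (+) (e \in F1) by rewrite symdiffE.
  have nU0 : U i (sh a 0) \notin M by apply: ex_RU.
  have nU0' : U (cS i) (sh a 0) \notin M by apply: hUL.
  have nR1 : R i (sh a 1) \notin M by apply: ex_UR0 pmM u1.
  have nR2 : R i (sh a 2) \notin M by exact: (ex_UR pmM u1).
  have alt0 : alternating M1 i (sh a 0).
    apply/orP; left; rewrite /alternating -shS !m1 /F1 !faceE -!shS !xpair_eqE /=.
    rewrite ?eqxx ?hi2 ?hi' /=; shsimp; rewrite /=.
    by move: h0 nU0 nU0' nR1; rewrite /R /U !addbF !addbT => -> -> -> ->.
  set M2 := symdiff M1 (face_edges i (sh a 0)).
  have pm2 : pm M2 by apply: pm_flip.
  have W2 : W M2 + 2 = W M1.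
    apply: W_dec; rewrite !m1 /F1 !faceE -!shS !xpair_eqE ?eqxx ?hi2 ?hi' /=; shsimp;
    rewrite /=.
    + by move: h0; rewrite /R => ->.
    + by move: nR1; rewrite /R => /negbTE ->.
  have m2 e : (e \in M2) = (e \in M) (+) (e \in F1) (+) (e \in face_edges i (sh a 0)).
    by rewrite symdiffE m1.
  have [M3 [c3 [pm3 W3]]] : red M2.
    apply: (IH (g - 2) M2 i (sh a 2)) => //.
    + clear -gN g3; lia.
    + by rewrite oddB // og.
    + clear -gp; lia.
    + rewrite sh_add add0n m2 /F1 !faceE -!shS !xpair_eqE ?eqxx ?hi2 ?hi' /=; shsimp.
      by move: nR2; rewrite /R => /negbTE ->.
    + rewrite sh_add subnK // m2 /F1 !faceE -!shS !xpair_eqE ?eqxx ?hi2 ?hi' /=; shsimp.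
      by rewrite hg !gtn_eqF //; apply: ltn_trans g3.
    + move=> t tg ot; have t2p : t + 2 < p by clear -tg gp; lia.
      have [v1 v2] : U i (sh a (t + 2)) \in M /\ U (cS i) (sh a (t + 2)) \in M.
        by apply: hU; [clear -tg g3; lia | rewrite addn2 /= negbK].
      move: v1 v2; rewrite /U => v1 v2.
      split; rewrite (sh_add a 2 t) m2 /F1 /U !faceE -!shS !xpair_eqE ?eqxx ?hi2 ?hi' /=; shsimp;
        by rewrite ?v1 ?v2 addn2 /= ?andbF.
  exists M3; split; last by split => //; clear -W1 W2 W3; lia.
  apply: connect_trans (connect1 (flipI alt1)) _.
  exact: connect_trans (connect1 (flipI alt0)) c3.
-
  subst g.
  have alt : alternating M i (sh a 0).
    apply/orP; left; rewrite /alternating -shS.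
    have n1 := ex_RU pmM h0; have n2 := hUL _ h0.
    by move: h0 hg n1 n2; rewrite /R /U => -> -> -> ->.
  exists (symdiff M (face_edges i (sh a 0))); split; first exact/connect1/flipI.
  split; first exact: pm_flip.
  have := @W_dec M i (sh a 0) h0 hg; clear; lia.
Qed.


Lemma hzL M c r : R (cP c) r \in M -> hz M c r.
Proof. by rewrite /hz => ->; rewrite orbT. Qed.
Lemma hzR M c r : R c r \in M -> hz M c r.
Proof. by rewrite /hz => ->. Qed.

Lemma Qred N : forall g M c a, g <= N -> pm M -> 0 < g < p ->
  ((R c (sh a 0) \in M /\ R c (sh a g) \in M)
   \/ (R (cP c) (sh a 0) \in M /\ R (cP c) (sh a g) \in M)) ->
  vbet M c a g -> red M.
Proof.
elim: N => [|N IH] g M c a gN pmM gp hE hv; first by move: gp; have -> : g = 0 by clear -gN; lia.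
have hz0 : hz M c (sh a 0) by case: hE => -[h _]; [apply: hzR | apply: hzL].
have hzg : hz M c (sh a g) by case: hE => -[_ h]; [apply: hzR | apply: hzL].
have og : odd g by apply: (PL_end pmM _ hz0 hv hzg); case/andP: gp.
have PLc := PL pmM hz0 hv.
case: hE => -[h0 hg].
-
  set c' := cS c.
  have ec : cP c' = c by rewrite /c' ordSK.
  have noL t : 0 < t < g -> R (cP c') (sh a t) \notin M.
    by move=> tg; rewrite ec; apply: contra (hv t tg) => h; rewrite /hz h.
  have hz0' : hz M c' (sh a 0) by apply: hzL; rewrite ec.
  have hzg' : hz M c' (sh a g) by apply: hzL; rewrite ec.
  case: (classic (exists t, (0 < t < g) && hz M c' (sh a t))) => [ex1|nex1].
  + case: (first_ex ex1) => t1 [/andP [t1g hz1] mt1].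
    have R1 : R c' (sh a t1) \in M.
      by move: hz1; rewrite /hz (negbTE (noL _ t1g)) orbF.
    have vb1 : vbet M c' a t1.
      move=> t /andP [t0 tt1]; have := mt1 t tt1; rewrite t0 /=.
      by have -> : t < g by clear -tt1 t1g; lia.
    have ot1 : odd t1 by apply: (PL_end pmM _ hz0' vb1 hz1); case/andP: t1g.
    case: (classic (exists t, (t1 < t < g) && hz M c' (sh a t))) => [ex2|nex2].
    * case: (first_ex ex2) => t2 [/andP [t2g hz2] mt2].
      have R2 : R c' (sh a t2) \in M.
        move: hz2; rewrite /hz (negbTE (noL t2 _)) ?orbF //.
        by clear -t2g t1g; lia.
      apply: (IH (t2 - t1) M c' (sh a t1)) => //.
      -- by clear -gN t2g t1g; lia.
      -- by clear -gp t2g t1g; lia.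
      -- left; rewrite sh_add add0n sh_add subnK; [by split | clear -t2g; lia].
      -- move=> u /andP [u0 ut]; rewrite sh_add.
         have := mt2 (u + t1) ltac:(clear -ut; lia).
         have -> : t1 < u + t1 < g by clear -u0 ut t2g; lia.
         by [].
    * have vb2 : vbet M c' (sh a t1) (g - t1).
        move=> u /andP [u0 ut]; rewrite sh_add; apply/negP => h; apply: nex2.
        by exists (u + t1); rewrite h andbT; clear -u0 ut; lia.
      have := PL_end pmM _ hz1 vb2; rewrite sh_add subnK; last by clear -t1g; lia.
      move=> /(_ ltac:(clear -t1g; lia) hzg').
      by rewrite oddB ?og ?ot1 //; clear -t1g; lia.
  + have vb : vbet M c' a g.
      by move=> t tg; apply/negP => h; apply: nex1; exists t; rewrite tg h.
    have PLc' := PL pmM hz0' vb.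
    apply: (slide (leqnn g) pmM og _ h0 hg); first by case/andP: gp.
    by move=> t tg ot; rewrite PLc // PLc' //.
-
  set c' := cP c.
  have ec : cS c' = c by rewrite /c' ord_predK.
  have noR t : 0 < t < g -> R c' (sh a t) \notin M.
    by move=> tg; apply: contra (hv t tg) => h; rewrite /hz h orbT.
  have hz0' : hz M c' (sh a 0) by apply: hzR.
  have hzg' : hz M c' (sh a g) by apply: hzR.
  case: (classic (exists t, (0 < t < g) && hz M c' (sh a t))) => [ex1|nex1].
  + case: (first_ex ex1) => t1 [/andP [t1g hz1] mt1].
    have R1 : R (cP c') (sh a t1) \in M.
      by move: hz1; rewrite /hz (negbTE (noR _ t1g)).
    have vb1 : vbet M c' a t1.
      move=> t /andP [t0 tt1]; have := mt1 t tt1; rewrite t0 /=.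
      by have -> : t < g by clear -tt1 t1g; lia.
    have ot1 : odd t1 by apply: (PL_end pmM _ hz0' vb1 hz1); case/andP: t1g.
    case: (classic (exists t, (t1 < t < g) && hz M c' (sh a t))) => [ex2|nex2].
    * case: (first_ex ex2) => t2 [/andP [t2g hz2] mt2].
      have R2 : R (cP c') (sh a t2) \in M.
        move: hz2; rewrite /hz (negbTE (noR t2 _)) //.
        by clear -t2g t1g; lia.
      apply: (IH (t2 - t1) M c' (sh a t1)) => //.
      -- by clear -gN t2g t1g; lia.
      -- by clear -gp t2g t1g; lia.
      -- right; rewrite sh_add add0n sh_add subnK; [by split | clear -t2g; lia].
      -- move=> u /andP [u0 ut]; rewrite sh_add.
         have := mt2 (u + t1) ltac:(clear -ut; lia).
         have -> : t1 < u + t1 < g by clear -u0 ut t2g; lia.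
         by [].
    * have vb2 : vbet M c' (sh a t1) (g - t1).
        move=> u /andP [u0 ut]; rewrite sh_add; apply/negP => h; apply: nex2.
        by exists (u + t1); rewrite h andbT; clear -u0 ut; lia.
      have := PL_end pmM _ hz1 vb2; rewrite sh_add subnK; last by clear -t1g; lia.
      move=> /(_ ltac:(clear -t1g; lia) hzg').
      by rewrite oddB ?og ?ot1 //; clear -t1g; lia.
  + have vb : vbet M c' a g.
      by move=> t tg; apply/negP => h; apply: nex1; exists t; rewrite tg h.
    have PLc' := PL pmM hz0' vb.
    apply: (slide (leqnn g) pmM og _ h0 hg); first by case/andP: gp.
    by move=> t tg ot; rewrite ec PLc // PLc' //.
Qed.


Lemma walk M c a b : pm M -> R c a \in M -> R (cP c) b \in M -> red M.
Proof.
move=> pmM ha hb.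
have hza : hz M c a by apply: hzR.
suff : forall k s, p - s < k -> s <= p -> hz M c (sh a s) ->
         (R c (sh a s) \in M) = ~~ odd s -> red M.
  by move/(_ p.+1 0); apply => //; clear; lia.
elim=> [|k IH] s sk sp hzs ts; first by clear -sk; lia.
case: (ltngtP s p) => [slp|pls|esp]; last (by move: ts; rewrite esp sh_p ha op);
  first last; first (by clear -pls sp; lia).
have ex : exists g, (0 < g) && hz M c (sh (sh a s) g).
  by exists (p - s); rewrite sh_add subnK ?sh_p ?hza ?andbT //; clear -slp; lia.
case: (first_ex ex) => g [/andP [g0 hzg] mg].
have gps : g <= p - s.
  rewrite leqNgt; apply/negP => h; have := mg _ h.
  by rewrite sh_add subnK ?sh_p ?hza ?andbT //; clear -slp; lia.
have vb : vbet M c (sh a s) g.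
  by move=> t /andP [t0 tg]; have := mg t tg; rewrite t0.
have og : odd g := PL_end pmM g0 hzs vb hzg.
have gp : g < p.
  rewrite ltn_neqAle (leq_trans gps (leq_subr _ _)) andbT.
  apply/negP => /eqP eg.
  have s0 : s = 0 by clear -eg gps slp; lia.
  subst s; case: (sh_surj a b) => t tp et.
  have t0 : t != 0.
    apply/negP => /eqP t0; subst t; move: hb; rewrite -et => hb'.
    by move: (ex_RL pmM ha); rewrite hb'.
  have := vb t; rewrite et hzL //.
  by rewrite eg tp lt0n t0 => /(_ isT).
have Lx : ~~ (R c (sh a s) \in M) -> R (cP c) (sh a s) \in M.
  by move: hzs; rewrite /hz => /orP [->|->].
have Ly : ~~ (R c (sh (sh a s) g) \in M) -> R (cP c) (sh (sh a s) g) \in M.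
  by move: hzg; rewrite /hz => /orP [->|->].
case: (boolP ((R c (sh a s) \in M) == (R c (sh (sh a s) g) \in M))) => [/eqP eq|neq].
- apply: (Qred (leqnn g) pmM _ _ vb); first by rewrite g0 gp.
  case: (boolP (R c (sh a s) \in M)) => hx.
  + by left; split => //; rewrite -eq.
  + by right; split; [apply: Lx | apply: Ly; rewrite -eq].
- apply: (IH (g + s)).
  + by clear -sk g0 slp; lia.
  + by clear -gps slp; lia.
  + by rewrite -sh_add.
  + rewrite -sh_add oddD og /=.
    by move: neq ts; case: (R c (sh a s) \in M); case: (R c (sh (sh a s) g) \in M) => // _ <-.
Qed.

Lemma main_gen M : pm M -> exists M', connect (@flip q p) M M' /\ pm M' /\
  exists i, forall j, R i j \notin M'.
Proof.
move=> pmM; move: {2}(W M).+1 (ltnSn (W M)) => k; elim: k M pmM => [|k IH] M pmM Wk.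
  by clear -Wk; lia.
case: (classic (exists i, forall j, R i j \notin M)) => [ex|nex].
  by exists M; split => //; exact: connect0.
have hall : forall i, exists j, R i j \in M.
  move=> i; apply: NNPP => h; apply: nex; exists i => j; apply/negP => hj; apply: h; by exists j.
pose c : 'I_q := Ordinal (ltnW (ltnW hq)).
case: (hall c) => a ha; case: (hall (cP c)) => b hb.
case: (walk pmM ha hb) => M2 [c2 [pm2 W2]].
case: (IH M2 pm2) => [|M' [c' [pm' hi]]]; first by clear -Wk W2; lia.
by exists M'; split => //; apply: connect_trans c2 c'.
Qed.

End Torus.

Theorem lemma4p2 (n m : nat) (hn : 1 <= n) (hm : 2 <= m)
  (M : {set tedge (2 * m) (2 * n + 1)}) :
  perfect_matching M ->
  exists M' : {set tedge (2 * m) (2 * n + 1)},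
    [/\ connect (@flip (2 * m) (2 * n + 1)) M M', perfect_matching M' &
        exists i : 'I_(2 * m), M' :&: Eset (2 * n + 1) i = set0].
Proof.
move=> pmM.
have hq : 2 < 2 * m by clear -hm; lia.
have hp : 2 < 2 * n + 1 by clear -hn; lia.
have op : odd (2 * n + 1) by rewrite oddD oddM.
case: (main_gen hq hp op pmM) => M' [c [pm' [i hi]]].
exists M'; split => //; exists i.
apply/eqP; rewrite -subset0; apply/subsetP => e; rewrite in_setI => /andP [eM /imsetP [j _ ee]].
by move: eM; rewrite ee; move: (hi j); rewrite /R => /negbTE ->.
Qed.
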